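(* Let $V$ be a vertex algebra, $M_1,M_2,M_3$ be $V$-modules and $\mathcal Y:M_1\to\mathrm{Hom}(M_2,M_3[[z]]z^{-S})$, $a\mapsto\mathcal Y(a,z)=\sum_{n\in\mathbb C}a_{(n)}z^{-n-1}$, a linear map satisfying $T\mathcal Y(a,z)-\mathcal Y(a,z)T=\mathcal Y(Ta,z)=\partial_z\mathcal Y(a,z)$. Then $\mathcal Y$ satisfies the Jacobi identity $$\iota_{z_1,z_2}(z_1-z_2)^{n}Y(v,z_1)\mathcal{Y}(a,z_2)-\iota_{z_2,z_1}(z_1-z_2)^{n}\mathcal{Y}(a,z_2)Y(v,z_1)=\sum_{i\ge0}\mathcal Y(v_{(n+i)}a,z_2)\,\partial^{(i)}_{z_2}\delta(z_1,z_2)$$ for all $v\in V$, $a\in M_1$ and $n\in\mathbb Z$ if and only if for all $v\in V$, $a\in M_1$, $b\in M_2$ the following two identities hold: $$\mathcal Y(v_{(-1)}a,z)b=Y_+(v,z)\mathcal Y(a,z)b+\mathcal Y(a,z)Y_-(v,z)b,$$ $$Y(v,z_1)\mathcal Y(a,z_2)b-\mathcal Y(a,z_2)Y(v,z_1)b=\sum_{i\ge0}\mathcal Y(v_{(i)}a,z_2)b\,\partial^{(i)}_{z_2}\delta(z_1,z_2).$$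
   Context: $V$ is a vertex algebra with fields $Y(v,z)=\sum_{n\in\mathbb Z}v_{(n)}z^{-n-1}$. A $V$-module is a vector space $M$ with $T\in\mathrm{End}(M)$ and fields $Y^M(v,z)=\sum_{n\in\mathbb Z}v_{(n)}z^{-n-1}\in\mathrm{Hom}(M,M((z)))$ with $Y^M(\mathbf1,z)=\mathrm{id}$, $[T,Y^M(v,z)]=\partial_zY^M(v,z)$ and the Jacobi identity above (with $\mathcal Y$ replaced by $Y^M$); on modules $Y(v,z)$ denotes $Y^M(v,z)$. $S\subset\mathbb C$ satisfies $S+\mathbb Z=S$, $S/\mathbb Z$ finite, and $U[[z]]z^{-S}$ denotes formal sums $\sum_nf_nz^n$ with $n$ in a finite union of sets $-d+\mathbb Z_{\ge0}$, $d\in S$. $\iota_{z_1,z_2}$ denotes expansion in nonnegative powers of $z_2$ (domain $|z_1|>|z_2|$), $\delta(z_1,z_2)=\sum_{n\in\mathbb Z}z_1^nz_2^{-n-1}$, $\partial^{(i)}_{z}=\partial_z^i/i!$, $Y_+(v,z):=\sum_{n<0}v_{(n)}z^{-n-1}$ and $Y_-(v,z):=\sum_{n\ge0}v_{(n)}z^{-n-1}$. *)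

(* Defs.v *)
From mathcomp Require Import all_boot all_algebra.
From mathcomp Require Import reals complex.
Set Implicit Arguments. Unset Strict Implicit. Unset Printing Implicit Defensive.
Import GRing.Theory Num.Theory.
Local Open Scope ring_scope.

Section Defs.
Variable K : fieldType.

Definition gbin (n : int) (j : nat) : K :=
  (\prod_(i < j) (n%:~R - (i : nat)%:R)) / (j`!)%:R.

Definition series_sum {U : lmodType K} (f : nat -> U) (s : U) : Prop :=
  exists N0 : nat, forall N : nat, (N0 <= N)%N -> \sum_(j < N) f j = s.

Definition lin {U W : lmodType K} (f : U -> W) : Prop :=
  forall (c : K) (x y : U), f (c *: x + y) = c *: f x + f y.

(* mode maps  mu u n w = u_(n) w ;  bilinear in (u, w) *)
Definition bilin_modes {E : Type} {U W X : lmodType K} (mu : U -> E -> W -> X) : Prop :=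
  (forall n w, lin (fun u => mu u n w)) /\ (forall u n, lin (mu u n)).

(* Y(u,z)w in W((z)) : u_(n) w = 0 for n >> 0 *)
Definition truncation {U W X : lmodType K} (mu : U -> int -> W -> X) : Prop :=
  forall u w, exists N : int, forall n : int, N <= n -> mu u n w = 0.

(* Jacobi identity, written coefficientwise: for all v, a, b, n in Z, and all
   exponents m in Z (for z1) and p in E (for z2), the coefficient of
   z1^{-m-1} z2^{-p-1} in
     iota_{z1,z2}(z1-z2)^n Y(v,z1) Yc(a,z2) b - iota_{z2,z1}(z1-z2)^n Yc(a,z2) Y(v,z1) b
   equals that of   sum_{i>=0} Yc(v_(n+i) a, z2) b  d^{(i)}_{z2} delta(z1,z2). *)
Definition jacobi {E : zmodType} (ie : int -> E) {M1 M2 M3 : lmodType K} {V : lmodType K}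
    (m1 : V -> int -> M1 -> M1) (m2 : V -> int -> M2 -> M2) (m3 : V -> int -> M3 -> M3)
    (Yc : M1 -> E -> M2 -> M3) : Prop :=
  forall (v : V) (a : M1) (b : M2) (n m : int) (p : E),
    exists s1 s2 s3,
      series_sum (fun j => ((-1) ^+ j * gbin n j) *: m3 v (m + n - j%:Z) (Yc a (p + ie j%:Z) b)) s1
   /\ series_sum (fun j => ((-1) ^ (n + j%:Z) * gbin n j) *: Yc a (p + ie (n - j%:Z)) (m2 v (m + j%:Z) b)) s2
   /\ series_sum (fun i => gbin m i *: Yc (m1 v (n + i%:Z) a) (p + ie (m - i%:Z)) b) s3
   /\ s1 - s2 = s3.

Definition is_vertex_algebra {V : lmodType K} (vac : V) (T : V -> V) (md : V -> int -> V -> V) : Prop :=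
  lin T /\ bilin_modes md /\ truncation md /\
      (forall n w, md vac n w = if n == (-1)%R then w else 0) /\
      (* Y(v,z) 1 in V[[z]] and Y(v,z)1|_{z=0} = v, T 1 = 0 *)
      (forall v n, 0 <= n -> md v n vac = 0) /\ (forall v, md v (-1) vac = v) /\ T vac = 0 /\
      (* [T, Y(v,z)] = d/dz Y(v,z) *)
      (forall v n w, T (md v n w) - md v n (T w) = - n%:~R *: md v (n - 1) w) /\
      jacobi id md md md md.

Definition is_module {V : lmodType K} (vac : V) (md : V -> int -> V -> V)
    {M : lmodType K} (TM : M -> M) (mm : V -> int -> M -> M) : Prop :=
  lin TM /\ bilin_modes mm /\ truncation mm /\
      (forall n w, mm vac n w = if n == (-1)%R then w else 0) /\
      (forall v n w, TM (mm v n w) - mm v n (TM w) = - n%:~R *: mm v (n - 1) w) /\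
      jacobi id md mm mm mm.

Definition exponent_set (S : K -> Prop) : Prop :=
  (forall (s : K) (k : int), S s <-> S (s + k%:~R)) /\
  (exists ds : seq K, forall s, S s -> exists (d : K) (k : int), d \in ds /\ s = d + k%:~R).

(* f = sum_n f(n) z^{-n-1} lies in X[[z]] z^{-S}: the exponents -n-1 with
   f(n) <> 0 lie in a finite union of sets -d + Z_{>=0}, d in S. *)
Definition in_series_S {X : lmodType K} (S : K -> Prop) (f : K -> X) : Prop :=
  exists ds : seq K, (forall d, d \in ds -> S d) /\
    forall n : K, f n <> 0 -> exists d : K, exists k : nat, d \in ds /\ - n - 1 = - d + k%:R.

End Defs.

(* Main.v *)
Require Import Defs.
From mathcomp Require Import all_boot all_algebra.
From mathcomp Require Import reals complex.
From mathcomp Require Import ring zify.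
From Stdlib Require Import Classical ClassicalEpsilon FunctionalExtensionality.
Import GRing.Theory Num.Theory.
Local Open Scope ring_scope.
Set Implicit Arguments. Unset Strict Implicit. Unset Printing Implicit Defensive.

Definition evz {U : zmodType} (f : nat -> U) := exists N, forall j, (N <= j)%N -> f j = 0.
Definition Sm {U : zmodType} (f : nat -> U) : U :=
  \sum_(j < epsilon (inhabits 0%N) (fun N => forall j, (N <= j)%N -> f j = 0)) f j.

Section Sm.
Variable K : numFieldType.
Variable U : lmodType K.
Implicit Types f g : nat -> U.

Lemma sum_stab (f : nat -> U) N M : (forall j, (N <= j)%N -> f j = 0) -> (N <= M)%N ->
  \sum_(j < M) f j = \sum_(j < N) f j.
Proof.
move=> H /subnKC <-; elim: (M - N)%N => [|d IH]; first by rewrite addn0.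
by rewrite addnS big_ord_recr /= IH H ?addr0 // leq_addr.
Qed.

Lemma SmE f N : (forall j, (N <= j)%N -> f j = 0) -> Sm f = \sum_(j < N) f j.
Proof.
move=> H; rewrite /Sm.
set E := epsilon _ _.
have HE : forall j, (E <= j)%N -> f j = 0 := epsilon_spec (inhabits 0%N) (fun N => forall j, (N <= j)%N -> f j = 0) (ex_intro _ N H).
rewrite -(sum_stab HE (leq_maxl E N)) (sum_stab H (leq_maxr E N)) //.
Qed.

Lemma series_Sm f s : evz f -> (series_sum f s <-> s = Sm f).
Proof.
move=> [N HN]; split.
- move=> [N0 H0]; rewrite (SmE HN) -(H0 (maxn N0 N) (leq_maxl _ _)).
  by rewrite (sum_stab HN (leq_maxr _ _)).
- move=> ->; exists N => M HM; rewrite (SmE HN) (sum_stab HN HM) //.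
Qed.

Lemma series_Sm' f : evz f -> series_sum f (Sm f).
Proof. by move=> H; apply/(series_Sm _ H). Qed.

Lemma evz_impl (U' : lmodType K) (f : nat -> U') (g : nat -> U) : evz f -> (forall j, f j = 0 -> g j = 0) -> evz g.
Proof. by move=> [N HN] H; exists N => j /HN /H. Qed.

Lemma evzD f g : evz f -> evz g -> evz (fun j => f j + g j).
Proof.
move=> [N HN] [M HM]; exists (maxn N M) => j Hj.
by rewrite HN ?HM ?addr0 // (leq_trans _ Hj) // ?leq_maxl ?leq_maxr.
Qed.

Lemma evzZ (c : nat -> K) f : evz f -> evz (fun j => c j *: f j).
Proof. by move=> H; apply: (evz_impl H) => j ->; rewrite scaler0. Qed.

Lemma evzS f : evz f -> evz (fun j => f j.+1).
Proof. by move=> [N HN]; exists N => j Hj; apply: HN; apply: leqW. Qed.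

Lemma Sm_ext f g : (forall j, f j = g j) -> Sm f = Sm g.
Proof. by move=> H; rewrite (functional_extensionality _ _ H). Qed.

Lemma SmD f g : evz f -> evz g -> Sm (fun j => f j + g j) = Sm f + Sm g.
Proof.
move=> [N HN] [M HM].
have HfN : forall j, (maxn N M <= j)%N -> f j = 0 by move=> j Hj; apply: HN; apply: leq_trans Hj; apply: leq_maxl.
have HgN : forall j, (maxn N M <= j)%N -> g j = 0 by move=> j Hj; apply: HM; apply: leq_trans Hj; apply: leq_maxr.
have HfgN : forall j, (maxn N M <= j)%N -> f j + g j = 0 by move=> j Hj; rewrite HfN ?HgN ?addr0.
by rewrite (SmE HfN) (SmE HgN) (SmE HfgN) big_split.
Qed.

Lemma SmZ (c : K) f : evz f -> Sm (fun j => c *: f j) = c *: Sm f.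
Proof.
move=> [N HN].
have H2 : forall j, (N <= j)%N -> c *: f j = 0 by move=> j /HN ->; rewrite scaler0.
by rewrite (SmE HN) (SmE H2) scaler_sumr.
Qed.

Lemma SmN f : evz f -> Sm (fun j => - f j) = - Sm f.
Proof.
move=> H; rewrite -scaleN1r -SmZ //; apply: Sm_ext => j; by rewrite scaleN1r.
Qed.

Lemma SmB f g : evz f -> evz g -> Sm (fun j => f j - g j) = Sm f - Sm g.
Proof.
move=> Hf Hg; rewrite SmD ?SmN //; apply: (evz_impl Hg) => j ->; by rewrite oppr0.
Qed.

Lemma Sm0 : Sm (fun _ => 0 : U) = 0.
Proof. by rewrite (@SmE _ 0) // big_ord0. Qed.

Lemma Sm_shift f : evz f -> Sm f = f 0%N + Sm (fun j => f j.+1).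
Proof.
move=> [N HN].
have H2 : forall j, (N <= j)%N -> f j.+1 = 0 by move=> j Hj; apply: HN; apply: leqW.
have H1 : forall j, (N.+1 <= j)%N -> f j = 0 by move=> j Hj; apply: HN; apply: ltnW.
by rewrite (SmE H1) (SmE H2) big_ord_recl.
Qed.
End Sm.


Section Gbin.
Variable K : numFieldType.
Definition Pf (n : int) (j : nat) : K := \prod_(i < j) (n%:~R - (i : nat)%:R).

Lemma gbinE n j : gbin K n j = Pf n j / (j`!)%:R.
Proof. by []. Qed.

Lemma Pf_recr n j : Pf n j.+1 = Pf n j * (n%:~R - j%:R).
Proof. by rewrite /Pf big_ord_recr. Qed.

Lemma Pf_recl n j : Pf n j.+1 = n%:~R * Pf (n - 1) j.
Proof.
rewrite /Pf big_ord_recl /= subr0; congr (_ * _); apply: eq_bigr => i _.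
rewrite /bump /= add1n intrB mulrSr; ring.
Qed.

Lemma fact_neq0 j : (j`!)%:R != 0 :> K.
Proof. by rewrite pnatr_eq0 -lt0n fact_gt0. Qed.

Lemma natS_neq0 j : (j.+1)%:R != 0 :> K.
Proof. by rewrite pnatr_eq0. Qed.

Lemma gbin0 n : gbin K n 0 = 1.
Proof. by rewrite gbinE /Pf big_ord0 fact0 divr1. Qed.

Lemma gbinSfact n j : gbin K n j.+1 = Pf n j.+1 / ((j.+1)%:R * (j`!)%:R).
Proof. by rewrite gbinE factS natrM. Qed.

Lemma gbinGj n j : (j.+1)%:R * gbin K n j.+1 = n%:~R * gbin K (n - 1) j.
Proof.
have h1 := natS_neq0 j; have h2 := fact_neq0 j.
rewrite gbinSfact gbinE Pf_recl; field; by rewrite ?h2 ?nat1r ?h1.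
Qed.

Lemma gbinGmi m i : (m%:~R - i%:R) * gbin K m i = (i.+1)%:R * gbin K m i.+1.
Proof.
have h1 := natS_neq0 i; have h2 := fact_neq0 i.
rewrite gbinSfact gbinE Pf_recr; field; by rewrite ?h2 ?nat1r ?h1.
Qed.

Lemma gbinGnj n j : (n%:~R - j%:R) * gbin K n j = n%:~R * gbin K (n - 1) j.
Proof. by rewrite gbinGmi gbinGj. Qed.

Lemma gbin_pascal n j : gbin K (n + 1) j.+1 = gbin K n j.+1 + gbin K n j.
Proof.
apply: (mulfI (natS_neq0 j)).
rewrite gbinGj addrK mulrDr -gbinGmi intrD mulrS.
ring.
Qed.

Lemma gbin0S j : gbin K 0 j.+1 = 0.
Proof.
have := gbinGj 0 j; rewrite (_ : (0:int)%:~R = 0 :> K) // mul0r => /eqP; rewrite mulf_eq0 (negbTE (natS_neq0 j)) /=.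
by move/eqP.
Qed.

Lemma gbinm1 j : gbin K (-1) j = (-1) ^+ j.
Proof.
elim: j => [|j IH]; first by rewrite gbin0.
apply: (mulfI (natS_neq0 j)); rewrite -gbinGmi IH exprS mulrS.
rewrite -[(-1)%:~R]/((-1 : int)%:~R) rmorphN /= rmorph1 /=. ring.
Qed.
End Gbin.


Section Lin.
Variable K : numFieldType.
Variables U W : lmodType K.
Lemma lin0 (f : U -> W) : lin f -> f 0 = 0.
Proof.
move=> H; have := H 1 0 0; rewrite scaler0 add0r scale1r.
by move=> /(congr1 (fun x => x - f 0)); rewrite subrr addrK => <-.
Qed.
Lemma linZ (f : U -> W) c x : lin f -> f (c *: x) = c *: f x.
Proof. by move=> H; rewrite -[c *: x]addr0 H lin0 ?addr0. Qed.
Lemma linD (f : U -> W) x y : lin f -> f (x + y) = f x + f y.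
Proof. by move=> H; have := H 1 x y; rewrite !scale1r. Qed.
End Lin.

Section SmP.
Variable K : numFieldType.
Variable U : lmodType K.

Lemma SmP (m : int) (Kf : nat -> U) : evz Kf ->
  Sm (fun i => gbin K (m+1) i *: Kf i) =
  Sm (fun i => gbin K m i *: Kf i) + Sm (fun i => gbin K m i *: Kf i.+1).
Proof.
move=> H.
have H1 := evzS H.
rewrite Sm_shift; last by apply: evzZ.
rewrite [Sm (fun i => gbin K m i *: Kf i)]Sm_shift; last by apply: evzZ.
rewrite /= !gbin0 !scale1r.
rewrite (@Sm_ext _ _ (fun j => gbin K (m + 1) j.+1 *: Kf j.+1)
   (fun j => gbin K m j.+1 *: Kf j.+1 + gbin K m j *: Kf j.+1)); last first.
  by move=> j; rewrite gbin_pascal scalerDl.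
rewrite SmD; try apply: evzZ => //.
by rewrite addrA.
Qed.

Lemma SmGj (n : int) (Kf : nat -> U) : evz Kf ->
  Sm (fun i => (i%:R * gbin K n i) *: Kf i) = n%:~R *: Sm (fun i => gbin K (n-1) i *: Kf i.+1).
Proof.
move=> H; rewrite Sm_shift; last by apply: evzZ.
rewrite /= mul0r scale0r add0r -SmZ; last by apply: evzZ; apply: evzS.
apply: Sm_ext => j; by rewrite gbinGj scalerA.
Qed.
End SmP.

Lemma comb6 (U : zmodType) (x1 y1 x2 y2 x3 y3 : U) :
  x1 - y1 - (x2 - y2) - (x3 - y3) = (x1 - x2 - x3) - (y1 - y2 - y3).
Proof.
rewrite !(opprB, opprD, opprK, addrA).
rewrite -(addrAC _ (- x2)) -(addrAC _ (-x3)).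
rewrite -(addrAC _ (- x2)) -(addrAC _ (-x3)).
rewrite (addrAC (x1 - x2) (-y1) (-x3)) (addrAC (x1 - x2 - x3) (-y1) y2).
by rewrite (addrAC _ (-y1) y3) (addrAC _ y3 y2).
Qed.


Section Main.
Variable K : numFieldType.
Variables V M1 M2 M3 : lmodType K.
Variables (m1 : V -> int -> M1 -> M1) (m2 : V -> int -> M2 -> M2) (m3 : V -> int -> M3 -> M3).
Variable Yc : M1 -> K -> M2 -> M3.
Variable T1 : M1 -> M1.
Hypothesis lin1 : forall u n, lin (m1 u n).
Hypothesis lin2 : forall u n, lin (m2 u n).
Hypothesis lin3 : forall u n, lin (m3 u n).
Hypothesis linYa : forall p w, lin (fun u => Yc u p w).
Hypothesis linYb : forall u p, lin (Yc u p).
Hypothesis tr1 : truncation m1.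
Hypothesis tr2 : truncation m2.
Hypothesis serY : forall a b q, evz (fun j => Yc a (q + j%:R) b).
Hypothesis T1c : forall v n w, T1 (m1 v n w) - m1 v n (T1 w) = - n%:~R *: m1 v (n - 1) w.
Hypothesis YT : forall a b p, Yc (T1 a) p b = - p *: Yc a (p - 1) b.

Lemma intr_natE (j : nat) : (j%:Z)%:~R = j%:R :> K.
Proof. by []. Qed.

Definition t1 v a b (n m : int) (p : K) (j : nat) : M3 :=
  ((-1) ^+ j * gbin K n j) *: m3 v (m + n - j%:Z) (Yc a (p + (j%:Z)%:~R) b).
Definition t2 v a b (n m : int) (p : K) (j : nat) : M3 :=
  ((-1) ^ (n + j%:Z) * gbin K n j) *: Yc a (p + (n - j%:Z)%:~R) (m2 v (m + j%:Z) b).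
Definition t3 v a b (n m : int) (p : K) (i : nat) : M3 :=
  gbin K m i *: Yc (m1 v (n + i%:Z) a) (p + (m - i%:Z)%:~R) b.

Lemma evz_trunc (U : lmodType K) (f : int -> U) : (exists N : int, forall n, N <= n -> f n = 0) ->
  forall m : int, evz (fun j => f (m + j%:Z)).
Proof.
move=> [N HN] m; exists `|N - m|%N => j Hj; apply: HN.
lia.
Qed.

Lemma ev1 v a b n m p : evz (t1 v a b n m p).
Proof.
apply: (evz_impl (serY a b p)) => j H.
by rewrite /t1 intr_natE H (lin0 (lin3 _ _)) scaler0.
Qed.

Lemma ev2 v a b n m p : evz (t2 v a b n m p).
Proof.
have [N HN] := tr2 v b.
have := evz_trunc (f := m2 v ^~ b) (ex_intro _ N HN) m => H.
apply: (evz_impl H) => j /= Hj.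
by rewrite /t2 Hj (lin0 (linYb _ _)) scaler0.
Qed.

Lemma ev3 v a b n m p : evz (t3 v a b n m p).
Proof.
have [N HN] := tr1 v a.
have := evz_trunc (f := m1 v ^~ a) (ex_intro _ N HN) n => H.
apply: (evz_impl H) => j /= Hj.
by rewrite /t3 Hj (lin0 (linYa _ _)) scaler0.
Qed.


Lemma S1R1 v a b n m p : Sm (t1 v a b (n+1) m p) = Sm (t1 v a b n (m+1) p) - Sm (t1 v a b n m (p+1)).
Proof.
set G := fun j : nat => (-1)^+j *: m3 v (m + (n+1) - j%:Z) (Yc a (p + (j%:Z)%:~R) b).
have evG : evz G.
  apply: (evz_impl (serY a b p)) => j H.
  by rewrite /G intr_natE H (lin0 (lin3 _ _)) scaler0.
rewrite (@Sm_ext _ _ _ (fun j => gbin K (n+1) j *: G j)); last first.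
  by move=> j; rewrite /t1 /G scalerA mulrC.
rewrite SmP //; congr (_ + _).
  apply: Sm_ext => j; rewrite /t1 /G scalerA mulrC.
  by rewrite (_ : m + (n+1) - j%:Z = m + 1 + n - j%:Z) //; lia.
rewrite -SmN; last by apply: ev1.
apply: Sm_ext => j; rewrite /t1 /G scalerA exprS.
rewrite (_ : m + (n+1) - j.+1%:Z = m + n - j%:Z); last lia.
rewrite (_ : p + (j.+1%:Z)%:~R = p + 1 + (j%:Z)%:~R); last by rewrite !intr_natE mulrS; ring.
rewrite -scaleNr; congr (_ *: _); ring.
Qed.

Lemma sgnz (n : int) (j : nat) : (-1) ^ (n + j%:Z) = (-1) ^ n * (-1) ^+ j :> K.
Proof. by rewrite expfzDr // oppr_eq0 oner_eq0. Qed.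

Lemma evm2 (F : nat -> M2 -> M3) v b m : (forall j, F j 0 = 0) -> evz (fun j => F j (m2 v (m + j%:Z) b)).
Proof.
move=> HF; have [N HN] := tr2 v b.
have := evz_trunc (f := m2 v ^~ b) (ex_intro _ N HN) m => H.
by apply: (evz_impl H) => j /= ->.
Qed.

Lemma S2R1 v a b n m p : Sm (t2 v a b (n+1) m p) = Sm (t2 v a b n (m+1) p) - Sm (t2 v a b n m (p+1)).
Proof.
set G := fun j : nat => (-1)^(n + 1 + j%:Z) *: Yc a (p + (n + 1 - j%:Z)%:~R) (m2 v (m + j%:Z) b).
have evG : evz G.
  apply: (evm2 (F := fun j x => (-1)^(n+1+j%:Z) *: Yc a (p + (n+1-j%:Z)%:~R) x)) => j.
  by rewrite (lin0 (linYb _ _)) scaler0.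
rewrite (@Sm_ext _ _ _ (fun j => gbin K (n+1) j *: G j)); last first.
  by move=> j; rewrite /t2 /G scalerA mulrC.
rewrite SmP // addrC; congr (_ + _).
  apply: Sm_ext => j; rewrite /t2 /G scalerA mulrC.
  rewrite (_ : n + 1 + j.+1%:Z = n + j.+2%:Z); last lia.
  rewrite (_ : n + 1 - j.+1%:Z = n - j%:Z); last lia.
  rewrite (_ : m + j.+1%:Z = m + 1 + j%:Z); last lia.
  rewrite !sgnz !exprS; congr (_ *: _); ring.
rewrite -SmN; last by apply: ev2.
apply: Sm_ext => j; rewrite /t2 /G scalerA.
rewrite (_ : n + 1 + j%:Z = n + j.+1%:Z); last lia.
rewrite !sgnz exprS.
rewrite (_ : p + (n + 1 - j%:Z)%:~R = p + 1 + (n - j%:Z)%:~R); last by ring.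
rewrite -scaleNr; congr (_ *: _); ring.
Qed.

Lemma evm1 (F : nat -> M1 -> M3) v a n : (forall j, F j 0 = 0) -> evz (fun j => F j (m1 v (n + j%:Z) a)).
Proof.
move=> HF; have [N HN] := tr1 v a.
have := evz_trunc (f := m1 v ^~ a) (ex_intro _ N HN) n => H.
by apply: (evz_impl H) => j /= ->.
Qed.

Lemma S3R1 v a b n m p : Sm (t3 v a b n (m+1) p) = Sm (t3 v a b n m (p+1)) + Sm (t3 v a b (n+1) m p).
Proof.
set G := fun j : nat => Yc (m1 v (n + j%:Z) a) (p + (m + 1 - j%:Z)%:~R) b.
have evG : evz G.
  apply: (evm1 (F := fun j x => Yc x (p + (m+1-j%:Z)%:~R) b)) => j.
  by rewrite (lin0 (linYa _ _)).
rewrite (@Sm_ext _ _ _ (fun j => gbin K (m+1) j *: G j)); last by [].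
rewrite SmP //; congr (_ + _).
  apply: Sm_ext => j; rewrite /t3 /G.
  by rewrite (_ : p + (m + 1 - j%:Z)%:~R = p + 1 + (m - j%:Z)%:~R) //; ring.
apply: Sm_ext => j; rewrite /t3 /G.
rewrite (_ : n + j.+1%:Z = n + 1 + j%:Z); last lia.
by rewrite (_ : p + (m + 1 - j.+1%:Z)%:~R = p + (m - j%:Z)%:~R) //; ring.
Qed.

Definition D v a b n m p := Sm (t1 v a b n m p) - Sm (t2 v a b n m p) - Sm (t3 v a b n m p).

Lemma R1 v a b n m p : D v a b (n+1) m p = D v a b n (m+1) p - D v a b n m (p+1).
Proof.
have h3 : Sm (t3 v a b (n+1) m p) = Sm (t3 v a b n (m+1) p) - Sm (t3 v a b n m (p+1)).
  by rewrite S3R1 (addrAC _ _ (- _)) subrr add0r.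
by rewrite /D S1R1 S2R1 h3 comb6.
Qed.

Lemma evc (U : lmodType K) (c : K) (f : nat -> U) : evz f -> evz (fun j => c *: f j).
Proof. exact: (@evzZ K U (fun _ => c)). Qed.

Lemma S1R2 v a b n m p : n%:~R *: Sm (t1 v a b (n-1) m p) =
   p *: Sm (t1 v a b n m (p-1)) + Sm (t1 v (T1 a) b n m p).
Proof.
set G := fun j : nat => (-1)^+j *: m3 v (m + n - j%:Z) (Yc a (p - 1 + (j%:Z)%:~R) b).
have evG : evz G.
  apply: (evz_impl (serY a b (p - 1))) => j H.
  by rewrite /G intr_natE H (lin0 (lin3 _ _)) scaler0.
rewrite -SmZ; last by apply: ev1.
rewrite -SmD; [| by apply: evc; apply: ev1 | by apply: ev1].
transitivity (Sm (fun j => - ((j%:R * gbin K n j) *: G j))); last first.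
  apply: Sm_ext => j; rewrite /t1 /G YT (linZ _ _ (lin3 _ _)).
  rewrite (_ : p + (j%:Z)%:~R - 1 = p - 1 + (j%:Z)%:~R); last by ring.
  rewrite !scalerA -scalerDl -scaleNr; congr (_ *: _); rewrite intr_natE; ring.
rewrite SmN; last by apply: evzZ.
rewrite SmGj // -scalerN -SmN; last by apply: evzZ; apply: evzS.
congr (_ *: _); apply: Sm_ext => j; rewrite /t1 /G scalerA exprS.
rewrite (_ : m + n - j.+1%:Z = m + (n - 1) - j%:Z); last lia.
rewrite (_ : p - 1 + (j.+1%:Z)%:~R = p + (j%:Z)%:~R); last by rewrite !intr_natE mulrS; ring.
rewrite -scaleNr; congr (_ *: _); ring.
Qed.

Lemma sgnm1 (n : int) : (-1) ^ (n - 1) = - (-1) ^ n :> K.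
Proof.
have := @expfzDr K (-1) (n - 1) 1; rewrite subrK oppr_eq0 oner_eq0 => -> //.
by rewrite expr1z mulrN1 opprK.
Qed.

Lemma S2R2 v a b n m p : n%:~R *: Sm (t2 v a b (n-1) m p) =
   p *: Sm (t2 v a b n m (p-1)) + Sm (t2 v (T1 a) b n m p).
Proof.
rewrite -!SmZ; try by apply: ev2.
rewrite -SmD; [| by apply: evc; apply: ev2 | by apply: ev2].
apply: Sm_ext => j; rewrite /t2 YT.
rewrite (_ : p - 1 + (n - j%:Z)%:~R = p + (n - 1 - j%:Z)%:~R); last by ring.
rewrite (_ : p + (n - j%:Z)%:~R - 1 = p + (n - 1 - j%:Z)%:~R); last by ring.
rewrite !scalerA -scalerDl; congr (_ *: _).
rewrite (_ : n - 1 + j%:Z = n + j%:Z - 1); last lia.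
rewrite sgnm1.
set g1 := gbin K (n-1) j; set g0 := gbin K n j; set s := (-1) ^ (n + j%:Z).
have hG : n%:~R * g1 = (n%:~R - j%:R) * g0 by rewrite /g1 /g0 gbinGnj.
apply/eqP; rewrite -subr_eq0; apply/eqP.
transitivity (- s * (n%:~R * g1 - (n%:~R - j%:R) * g0)); first by ring.
by rewrite hG subrr mulr0.
Qed.

Lemma m1T v k w : m1 v k (T1 w) = T1 (m1 v k w) + k%:~R *: m1 v (k - 1) w.
Proof.
have := T1c v k w => /(congr1 (fun x => - x + T1 (m1 v k w))).
by rewrite opprB subrK scaleNr opprK addrC => <-.
Qed.

Lemma S3R2 v a b n m p : n%:~R *: Sm (t3 v a b (n-1) m p) =
   p *: Sm (t3 v a b n m (p-1)) + Sm (t3 v (T1 a) b n m p).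
Proof.
set G := fun i : nat => Yc (m1 v (n - 1 + i%:Z) a) (p + (m - i%:Z)%:~R) b.
have evG : evz G.
  apply: (evm1 (F := fun j x => Yc x (p + (m - j%:Z)%:~R) b)) => j.
  by rewrite (lin0 (linYa _ _)).
have evG1 : evz (fun i => G i.+1) by apply: evzS.
rewrite -SmZ; last by apply: ev3.
rewrite -SmD; [| by apply: evc; apply: ev3 | by apply: ev3].
transitivity (Sm (fun i => ((n + i%:Z)%:~R * gbin K m i) *: G i - ((i.+1)%:R * gbin K m i.+1) *: G i.+1)); last first.
  apply: Sm_ext => i; rewrite /t3 /G m1T (linD _ _ (linYa _ _)) (linZ _ _ (linYa _ _)) YT.
  rewrite (_ : n - 1 + i.+1%:Z = n + i%:Z); last lia.
  rewrite (_ : n + i%:Z - 1 = n - 1 + i%:Z); last lia.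
  rewrite (_ : p - 1 + (m - i%:Z)%:~R = p + (m - i.+1%:Z)%:~R); last by rewrite !intrD !intrN !intr_natE mulrS; ring.
  rewrite (_ : p + (m - i%:Z)%:~R - 1 = p + (m - i.+1%:Z)%:~R); last by rewrite !intrD !intrN !intr_natE mulrS; ring.
  rewrite -gbinGmi !scalerA scalerDr !scalerA addrA -scalerDl addrC; congr (_ + _); first by rewrite mulrC.
  rewrite -scaleNr; congr (_ *: _); ring.
rewrite SmB; [| by apply: evzZ | by apply: evzZ].
have hs := @Sm_shift _ _ (fun i => (i%:R * gbin K m i) *: G i) (evzZ _ evG).
rewrite /= mul0r scale0r add0r in hs; rewrite -hs.
rewrite -SmB; [| by apply: evzZ | by apply: evzZ].
rewrite -SmZ; last by apply: ev3.
apply: (@Sm_ext K M3) => i.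
rewrite /t3 /G -scalerBl scalerA; congr (_ *: _); ring.
Qed.

Lemma R2 v a b n m p : n%:~R *: D v a b (n-1) m p = p *: D v a b n m (p-1) + D v (T1 a) b n m p.
Proof.
rewrite /D !scalerBr S1R2 S2R2 S3R2.
set x1 := p *: _; set y1 := Sm _; set x2 := p *: Sm (t2 _ _ _ _ _ _); set y2 := Sm (t2 _ _ _ _ _ _).
set x3 := p *: Sm (t3 _ _ _ _ _ _); set y3 := Sm (t3 _ _ _ _ _ _).
rewrite !opprD !addrA.
by rewrite (addrAC x1 y1 (-x2)) (addrAC (x1 - x2 + y1) (-y2) (-x3)) (addrAC (x1 - x2) y1 (-x3)).
Qed.

Lemma R1g v a b n n' m m' p p' : n' = n + 1 -> m' = m + 1 -> p' = p + 1 ->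
  D v a b n' m p = D v a b n m' p - D v a b n m p'.
Proof. by move=> -> -> ->; apply: R1. Qed.

Lemma R2g v a b n n' m p p' : n' = n - 1 -> p' = p - 1 ->
  n%:~R *: D v a b n' m p = p *: D v a b n m p' + D v (T1 a) b n m p.
Proof. by move=> -> ->; apply: R2. Qed.

Lemma allJ : (forall v a b m p, D v a b 0 m p = 0) -> (forall v a b p, D v a b (-1) 0 p = 0) ->
  forall v a b n m p, D v a b n m p = 0.
Proof.
move=> J0 Jm1.
have Jpos : forall k : nat, forall v a b m p, D v a b k%:Z m p = 0.
  elim=> [|k IH] v a b m p; first exact: J0.
  rewrite (@R1g v a b k k.+1 m (m+1) p (p+1)) //; last by lia.
  by rewrite !IH subrr.
have Jm1p : forall k : nat, forall v a b p, D v a b (-1) k%:Z p = 0.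
  elim=> [|k IH] v a b p; first exact: Jm1.
  have := @R1g v a b (-1) 0 k k.+1 p (p+1) (ltac:(lia)) (ltac:(lia)) erefl.
  by rewrite J0 IH subr0 => <-.
have Jm1n : forall k : nat, forall v a b p, D v a b (-1) (- k%:Z) p = 0.
  elim=> [|k IH] v a b p; first exact: Jm1.
  have := @R1g v a b (-1) 0 (- k.+1%:Z) (- k%:Z) (p - 1) p (ltac:(lia)) (ltac:(lia)) (ltac:(by rewrite subrK)).
  by rewrite J0 IH sub0r => /eqP; rewrite eq_sym oppr_eq0 => /eqP.
have Jm1a : forall v a b m p, D v a b (-1) m p = 0.
  move=> v a b [k|k] p; first exact: Jm1p.
  by rewrite NegzE Jm1n.
have Jneg : forall k : nat, forall v a b m p, D v a b (-1 - k%:Z) m p = 0.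
  elim=> [|k IH] v a b m p.
    by have := Jm1a v a b m p; congr (D _ _ _ _ _ _ = _); lia.
  have := @R2g v a b (-1 - k%:Z) (-1 - k.+1%:Z) m p (p - 1) (ltac:(lia)) erefl.
  rewrite !IH scaler0 addr0.
  move/eqP; rewrite scaler_eq0 => /orP [|/eqP //].
  rewrite intr_eq0; lia.
move=> v a b [k|k] m p; first exact: Jpos.
by have := Jneg k v a b m p; rewrite NegzE; congr (D _ _ _ _ _ _ = _); lia.
Qed.

Lemma jacobi_iff : jacobi (fun k : int => k%:~R : K) m1 m2 m3 Yc <-> forall v a b n m p, D v a b n m p = 0.
Proof.
split => H v a b n m p.
  have [s1 [s2 [s3 [h1 [h2 [h3 e]]]]]] := H v a b n m p.
  move/(series_Sm _ (ev1 v a b n m p)): h1 => h1.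
  move/(series_Sm _ (ev2 v a b n m p)): h2 => h2.
  move/(series_Sm _ (ev3 v a b n m p)): h3 => h3.
  by rewrite /D -h1 -h2 -h3 e subrr.
exists (Sm (t1 v a b n m p)), (Sm (t2 v a b n m p)), (Sm (t3 v a b n m p)).
split; first exact: (series_Sm' (ev1 v a b n m p)).
split; first exact: (series_Sm' (ev2 v a b n m p)).
split; first exact: (series_Sm' (ev3 v a b n m p)).
by apply/eqP; rewrite -subr_eq0 -/(D v a b n m p) H.
Qed.

Lemma S1_0 v a b m p : Sm (t1 v a b 0 m p) = m3 v m (Yc a p b).
Proof.
rewrite Sm_shift; last exact: ev1.
rewrite (@Sm_ext _ _ _ (fun _ => 0)); last by move=> j; rewrite /t1 gbin0S mulr0 scale0r.
rewrite Sm0 addr0 /t1 gbin0 expr0 mul1r scale1r.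
congr (m3 v _ (Yc a _ b)); [lia | ring].
Qed.

Lemma S2_0 v a b m p : Sm (t2 v a b 0 m p) = Yc a p (m2 v m b).
Proof.
rewrite Sm_shift; last exact: ev2.
rewrite (@Sm_ext _ _ _ (fun _ => 0)); last by move=> j; rewrite /t2 gbin0S mulr0 scale0r.
rewrite Sm0 addr0 /t2 gbin0 mulr1 (_ : (0 + 0%:Z) = 0) // expr0z scale1r.
congr (Yc a _ (m2 v _ b)); [ring | lia].
Qed.

Lemma S3_0 v a b m p : Sm (t3 v a b 0 m p) =
   Sm (fun i => gbin K m i *: Yc (m1 v i%:Z a) (p + (m - i%:Z)%:~R) b).
Proof. by apply: Sm_ext => i; rewrite /t3 add0r. Qed.

Lemma evc2 v a b m p : evz (fun i => gbin K m i *: Yc (m1 v i%:Z a) (p + (m - i%:Z)%:~R) b).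
Proof. by apply: (evz_impl (ev3 v a b 0 m p)) => j; rewrite /t3 add0r. Qed.

Lemma c2_iff : (forall (v : V) (a : M1) (b : M2) (m : int) (p : K),
       exists s,
         series_sum (fun i => gbin K m i *: Yc (m1 v i%:Z a) (p + (m - i%:Z)%:~R) b) s
      /\ m3 v m (Yc a p b) - Yc a p (m2 v m b) = s)
  <-> forall v a b m p, D v a b 0 m p = 0.
Proof.
split => H v a b m p.
  have [s [hs e]] := H v a b m p.
  move/(series_Sm _ (evc2 v a b m p)): hs => hs.
  by rewrite /D S1_0 S2_0 S3_0 -hs e subrr.
exists (Sm (fun i => gbin K m i *: Yc (m1 v i%:Z a) (p + (m - i%:Z)%:~R) b)).
split; first exact: (series_Sm' (evc2 v a b m p)).
by apply/eqP; rewrite -subr_eq0 -S1_0 -S2_0 -S3_0 -/(D v a b 0 m p) H.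
Qed.

Lemma m1z : (-1) ^ (-1) = -1 :> K.
Proof. by have := sgnm1 0; rewrite sub0r expr0z. Qed.

Lemma sq1 (j : nat) : (-1) ^+ j * (-1) ^+ j = 1 :> K.
Proof. by rewrite -exprMn mulrNN mulr1 expr1n. Qed.

Definition c1f1 v a b p := fun k : nat => m3 v (-1 - k%:Z) (Yc a (p + k%:R) b).
Definition c1f2 v a b p := fun k : nat => Yc a (p - k%:R - 1) (m2 v k%:Z b).

Lemma S1_m1 v a b p : Sm (t1 v a b (-1) 0 p) = Sm (c1f1 v a b p).
Proof.
apply: Sm_ext => j; rewrite /t1 /c1f1 gbinm1 sq1 scale1r intr_natE.
congr (m3 v _ _); lia.
Qed.

Lemma S3_m1 v a b p : Sm (t3 v a b (-1) 0 p) = Yc (m1 v (-1) a) p b.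
Proof.
rewrite Sm_shift; last exact: ev3.
rewrite (@Sm_ext _ _ _ (fun _ => 0)); last by move=> j; rewrite /t3 gbin0S scale0r.
rewrite Sm0 addr0 /t3 gbin0 scale1r.
congr (Yc (m1 v _ a) _ b); first [lia | ring].
Qed.

Lemma evc1f1 v a b p : evz (c1f1 v a b p).
Proof.
apply: (evz_impl (ev1 v a b (-1) 0 p)) => j; rewrite /t1 /c1f1 gbinm1 sq1 scale1r intr_natE.
by rewrite (_ : 0 + -1 - j%:Z = -1 - j%:Z) //; lia.
Qed.

Lemma evc1f2 v a b p : evz (c1f2 v a b p).
Proof.
apply: (evz_impl (ev2 v a b (-1) 0 p)) => j; rewrite /t2 /c1f2 sgnz gbinm1 m1z -mulrA sq1 mulr1 scaleN1r.
rewrite (_ : 0 + j%:Z = j%:Z); last lia.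
rewrite (_ : p + (-1 - j%:Z)%:~R = p - j%:R - 1); last by ring.
by move/eqP; rewrite oppr_eq0 => /eqP.
Qed.

Lemma S2_m1 v a b p : Sm (t2 v a b (-1) 0 p) = - Sm (c1f2 v a b p).
Proof.
rewrite -SmN; last by apply: evc1f2.
apply: Sm_ext => j; rewrite /t2 /c1f2 sgnz gbinm1 m1z -mulrA sq1 mulr1 scaleN1r.
congr (- Yc a _ (m2 v _ b)); first [lia | ring].
Qed.

Lemma c1_iff : (forall (v : V) (a : M1) (b : M2) (p : K),
       exists s1 s2,
         series_sum (fun k => m3 v (-1 - k%:Z) (Yc a (p + k%:R) b)) s1
      /\ series_sum (fun k => Yc a (p - k%:R - 1) (m2 v k%:Z b)) s2
      /\ Yc (m1 v (-1) a) p b = s1 + s2)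
  <-> forall v a b p, D v a b (-1) 0 p = 0.
Proof.
split => H v a b p.
  have [s1 [s2 [h1 [h2 e]]]] := H v a b p.
  move/(series_Sm _ (evc1f1 v a b p)): h1 => h1.
  move/(series_Sm _ (evc1f2 v a b p)): h2 => h2.
  by rewrite /D S1_m1 S2_m1 S3_m1 e h1 h2 opprK subrr.
exists (Sm (c1f1 v a b p)), (Sm (c1f2 v a b p)).
split; first exact: (series_Sm' (evc1f1 v a b p)).
split; first exact: (series_Sm' (evc1f2 v a b p)).
have := H v a b p; rewrite /D S1_m1 S2_m1 S3_m1 opprK => /eqP; rewrite subr_eq0 => /eqP.
by move=> ->.
Qed.

Definition c1prop := forall (v : V) (a : M1) (b : M2) (p : K),
       exists s1 s2,
         series_sum (fun k => m3 v (-1 - k%:Z) (Yc a (p + k%:R) b)) s1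
      /\ series_sum (fun k => Yc a (p - k%:R - 1) (m2 v k%:Z b)) s2
      /\ Yc (m1 v (-1) a) p b = s1 + s2.
Definition c2prop := forall (v : V) (a : M1) (b : M2) (m : int) (p : K),
       exists s,
         series_sum (fun i => gbin K m i *: Yc (m1 v i%:Z a) (p + (m - i%:Z)%:~R) b) s
      /\ m3 v m (Yc a p b) - Yc a p (m2 v m b) = s.

Lemma main_equiv : jacobi (fun k : int => k%:~R : K) m1 m2 m3 Yc <-> (c1prop /\ c2prop).
Proof.
rewrite /c1prop /c2prop jacobi_iff c1_iff c2_iff; split.
  by move=> H; split => *; apply: H.
by move=> [H1 H2]; apply: allJ.
Qed.

End Main.


Lemma bound_ds (K : numFieldType) (ds : seq K) (q : K) : exists N, forall j, (N <= j)%N ->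
  forall d (k : nat), d \in ds -> - (q + j%:R) - 1 <> - d + k%:R.
Proof.
elim: ds => [|d ds [N IH]]; first by exists 0%N => j _ d k.
have key : forall j k : nat, - (q + j%:R) - 1 = - d + k%:R -> (j + k)%:R = d - q - 1.
  move=> j k E; rewrite natrD.
  have -> : k%:R = - (q + j%:R) - 1 + d by rewrite E; ring.
  ring.
case: (classic (exists c : nat, c%:R = d - q - 1)) => [[c Hc]|Hn].
  exists (maxn N c.+1) => j Hj d' k; rewrite in_cons => /orP [/eqP ->|Hd].
    move=> /key; rewrite -Hc => /eqP; rewrite eqr_nat => /eqP Hjk.
    have : (c.+1 <= j)%N by apply: leq_trans Hj; apply: leq_maxr.
    lia.
  apply: IH => //; apply: leq_trans Hj; apply: leq_maxl.
exists N => j Hj d' k; rewrite in_cons => /orP [/eqP ->|Hd].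
  by move=> /key E; apply: Hn; exists (j + k)%N.
exact: IH.
Qed.

Lemma serY_of (K : numFieldType) (X : lmodType K) (S : K -> Prop) (f : K -> X) :
  in_series_S S f -> forall q, evz (fun j => f (q + j%:R)).
Proof.
move=> [ds [_ H]] q; have [N HN] := bound_ds ds q.
exists N => j Hj; apply: NNPP => Hf.
have [d [k [Hd E]]] := H _ Hf.
exact: (HN j Hj d k Hd E).
Qed.

Unset Implicit Arguments.

Theorem proposition3p7 (R : realType)
    (V M1 M2 M3 : lmodType R[i])
    (vac : V) (T : V -> V) (md : V -> int -> V -> V)
    (T1 : M1 -> M1) (m1 : V -> int -> M1 -> M1)
    (T2 : M2 -> M2) (m2 : V -> int -> M2 -> M2)
    (T3 : M3 -> M3) (m3 : V -> int -> M3 -> M3)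
    (S : R[i] -> Prop) (Yc : M1 -> R[i] -> M2 -> M3) :
  is_vertex_algebra vac T md ->
  is_module vac md T1 m1 -> is_module vac md T2 m2 -> is_module vac md T3 m3 ->
  exponent_set S ->
  (* Yc : M1 -> Hom(M2, M3[[z]] z^{-S}) linear;  Yc a p b = a_(p) b *)
  bilin_modes Yc ->
  (forall a b, in_series_S S (fun p => Yc a p b)) ->
  (* T Y(a,z) - Y(a,z) T = Y(Ta,z) *)
  (forall a b p, T3 (Yc a p b) - Yc a p (T2 b) = Yc (T1 a) p b) ->
  (* Y(Ta,z) = d/dz Y(a,z) *)
  (forall a b p, Yc (T1 a) p b = - p *: Yc a (p - 1) b) ->
  (jacobi (fun k : int => k%:~R) m1 m2 m3 Yc <->
   ((forall (v : V) (a : M1) (b : M2) (p : R[i]),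
       exists s1 s2,
         series_sum (fun k => m3 v (-1 - k%:Z) (Yc a (p + k%:R) b)) s1
      /\ series_sum (fun k => Yc a (p - k%:R - 1) (m2 v k%:Z b)) s2
      /\ Yc (m1 v (-1) a) p b = s1 + s2)
    /\
    (forall (v : V) (a : M1) (b : M2) (m : int) (p : R[i]),
       exists s,
         series_sum (fun i => gbin R[i] m i *: Yc (m1 v i%:Z a) (p + (m - i%:Z)%:~R) b) s
      /\ m3 v m (Yc a p b) - Yc a p (m2 v m b) = s))).
Proof.
move=> _ [_ [[_ l1] [tr1 [_ [Tc1 _]]]]] [_ [[_ l2] [tr2 _]]] [_ [[_ l3] _]] _ [lYa lYb] hS _ hYT.
have sY : forall a b q, evz (fun j => Yc a (q + j%:R) b) := fun a b q => serY_of (hS a b) q.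
exact: (main_equiv l3 lYa lYb tr1 tr2 sY Tc1 hYT).
Qed.
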